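(* Let $E$ and $\tilde{E}$ be the right and left algebraic eigenspaces of the nonlinear eigenvalues of $P(z)$ enclosed in $\Gamma$, respectively. Then (1) $E = F \mathcal{E}$, (2) $\tilde{E} = L\tilde{\mathcal{E}}$.
   Context: Let $A_0, \ldots, A_d \in \mathbb{C}^{n\times n}$ with $A_d \neq 0$ (not necessarily invertible), and let $P(z) = \sum_{j=0}^d z^j A_j$, with $\det P(z)$ not identically zero. A number $\lambda$ is a nonlinear eigenvalue if $P(\lambda)x=0$, $\tilde{x}^*P(\lambda)=0$ for nontrivial $x,\tilde{x}\in\mathbb{C}^n$. Ordered sequences $x_0,\ldots,x_{k-1}$ and $\tilde{x}_0,\ldots,\tilde{x}_{k-1}$ in $\mathbb{C}^n$ are right and left Jordan chains of $P$ at $\lambda$ if $\sum_{l=0}^j \frac{1}{l!}P^{(l)}(\lambda)x_{j-l}=0$ and $\sum_{l=0}^j \frac{1}{l!}\tilde{x}_{j-l}^*P^{(l)}(\lambda)=0$ for $j=0,\ldots,k-1$; the right (left) algebraic eigenspace of a set of nonlinear eigenvalues is the span of all right (left) nonlinear generalized eigenvectors (members of such chains) for all eigenvalues in the set. $\Gamma$ is a positively oriented, bounded, simple, closed contour not crossing any eigenvalue. The first companion linearization is the pencil $\mathcal{A} - z\mathcal{B}\in\mathbb{C}^{nd\times nd}$, written in $d\times d$ blocks of size $n\times n$: $\mathcal{A}$ has identity blocks $I$ on the first block superdiagonal in its first $d-1$ block rows, zeros elsewhere in those rows, and last block row $[A_0, A_1, \ldots, A_{d-1}]$; $\mathcal{B}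 = \mathrm{diag}(I, \ldots, I, -A_d)$. Let $F = [I\ 0\ \cdots\ 0]\in\mathbb{C}^{n\times nd}$ and $L = [0\ \cdots\ 0\ I]\in\mathbb{C}^{n\times nd}$ (compatible block partitioning). Let $\mathcal{E}$ and $\tilde{\mathcal{E}}$ denote the right and left algebraic eigenspaces of the linear pencil $z\mathcal{B}-\mathcal{A}$ associated to its eigenvalues enclosed within $\Gamma$, i.e. the ranges of the Riesz projections $\frac{1}{2\pi i}\oint_\Gamma (z\mathcal{B}-\mathcal{A})^{-1}\mathcal{B}\,dz$ and $\frac{1}{2\pi i}\oint_\Gamma (z\mathcal{B}-\mathcal{A})^{-*}\mathcal{B}^*\,dz$. For a matrix $M$ and subspace $Z$, $MZ=\{Mz: z\in Z\}$. *)

(* Defs.v *)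
From HB Require Import structures.
From mathcomp Require Import all_boot all_order all_algebra.
From mathcomp Require Import complex reals.
Set Implicit Arguments. Unset Strict Implicit. Unset Printing Implicit Defensive.
Import Order.TTheory GRing.Theory Num.Theory.
Local Open Scope ring_scope.

Section Defs.
Variable C : numClosedFieldType.

Definition ctr N (v : 'cV[C]_N) : 'rV[C]_N := (map_mx Num.conj v)^T.

(* Q^{(l)}(lam) / l!  for a matrix polynomial Q *)
Definition taylor N (Q : 'M[{poly C}]_N) (lam : C) (l : nat) : 'M[C]_N :=
  map_mx (fun p => (p^`N(l)).[lam]) Q.

Definition evalpm N (Q : 'M[{poly C}]_N) (lam : C) : 'M[C]_N :=
  map_mx (fun p => p.[lam]) Q.

Definition nonlinear_eigenvalue N (Q : 'M[{poly C}]_N) (lam : C) : Prop :=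
  (exists x : 'cV[C]_N, x != 0 /\ evalpm Q lam *m x = 0) /\
  (exists xt : 'cV[C]_N, xt != 0 /\ ctr xt *m evalpm Q lam = 0).

Definition right_jordan_chain N (Q : 'M[{poly C}]_N) (lam : C) (k : nat)
  (xs : nat -> 'cV[C]_N) : Prop :=
  forall j : nat, (j < k)%N ->
    \sum_(l < j.+1) taylor Q lam l *m xs (j - l)%N = 0.

Definition left_jordan_chain N (Q : 'M[{poly C}]_N) (lam : C) (k : nat)
  (xs : nat -> 'cV[C]_N) : Prop :=
  forall j : nat, (j < k)%N ->
    \sum_(l < j.+1) ctr (xs (j - l)%N) *m taylor Q lam l = 0.

Definition right_gen_eigvec N (Q : 'M[{poly C}]_N) (lam : C) (x : 'cV[C]_N) :=
  exists k (xs : nat -> 'cV[C]_N) i,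
    right_jordan_chain Q lam k xs /\ (i < k)%N /\ x = xs i.

Definition left_gen_eigvec N (Q : 'M[{poly C}]_N) (lam : C) (x : 'cV[C]_N) :=
  exists k (xs : nat -> 'cV[C]_N) i,
    left_jordan_chain Q lam k xs /\ (i < k)%N /\ x = xs i.

Definition span N (S : 'cV[C]_N -> Prop) (x : 'cV[C]_N) : Prop :=
  exists (m : nat) (v : 'I_m -> 'cV[C]_N) (c : 'I_m -> C),
    (forall i, S (v i)) /\ x = \sum_(i < m) c i *: v i.

Definition right_alg_eigenspace N (Q : 'M[{poly C}]_N) (Omega : C -> Prop) :=
  span (fun x => exists lam, Omega lam /\ nonlinear_eigenvalue Q lam /\
                             right_gen_eigvec Q lam x).

Definition left_alg_eigenspace N (Q : 'M[{poly C}]_N) (Omega : C -> Prop) :=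
  span (fun x => exists lam, Omega lam /\ nonlinear_eigenvalue Q lam /\
                             left_gen_eigvec Q lam x).

Definition matpoly n d (A : 'I_d.+1 -> 'M[C]_n) : 'M[{poly C}]_n :=
  \matrix_(r, s) \sum_(j < d.+1) (A j r s)%:P * 'X^j.

Definition companionA n d (A : 'I_d.+1 -> 'M[C]_n) : 'M[C]_(\sum_(i < d) n) :=
  \mxblock_(i < d, j < d)
    (if val i == d.-1 then A (widen_ord (leqnSn d) j)
     else if val j == (val i).+1 then 1%:M else 0 : 'M[C]_n).

Definition companionB n d (A : 'I_d.+1 -> 'M[C]_n) : 'M[C]_(\sum_(i < d) n) :=
  \mxdiag_(i < d) (if val i == d.-1 then - A ord_max else 1%:M : 'M[C]_n).

Definition pencil N (AA BB : 'M[C]_N) : 'M[{poly C}]_N :=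
  \matrix_(r, s) ('X * (BB r s)%:P - (AA r s)%:P).

Definition Fmx n d : 'M[C]_(n, \sum_(i < d) n) :=
  \mxrow_(j < d) (if val j == 0%N then 1%:M else 0 : 'M[C]_n).

Definition Lmx n d : 'M[C]_(n, \sum_(i < d) n) :=
  \mxrow_(j < d) (if val j == d.-1 then 1%:M else 0 : 'M[C]_n).

End Defs.

(* Main.v *)
Require Import Defs.
From HB Require Import structures.
From mathcomp Require Import all_boot all_order all_algebra.
From mathcomp Require Import complex reals.
From mathcomp Require Import zify.
Set Implicit Arguments. Unset Strict Implicit. Unset Printing Implicit Defensive.
Import Order.TTheory GRing.Theory Num.Theory.
Local Open Scope ring_scope.


Section Gen.
Variable C : numClosedFieldType.
Implicit Types (p q : {poly C}).

Definition shiftp (lam : C) (p : {poly C}) := p \Po ('X + lam%:P).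

Lemma taylor_shift lam p l : (p^`N(l)).[lam] = (shiftp lam p)`_l.
Proof.
rewrite /shiftp; elim/poly_ind: p l => [|p c IH] l.
  have -> : (0:{poly C})^`N(l) = 0 by apply/polyP=> i; rewrite coef_nderivn !coef0 mul0rn.
  by rewrite comp_poly0 coef0 horner0.
rewrite comp_poly_MXaddC mulrDr !coefD coefMX coefMC coefC.
case: l => [|l].
  by rewrite nderivn0 hornerMXaddC -IH nderivn0 add0r.
rewrite (nderivnMXaddC l p c) hornerD hornerMX !IH addr0 /=.
by [].
Qed.

Definition coefs m k (M : 'M[{poly C}]_(m, k)) (j : nat) : 'M[C]_(m, k) :=
  map_mx (fun p => p`_j) M.

Lemma coefsM m k l (P : 'M[{poly C}]_(m, k)) (M : 'M[{poly C}]_(k, l)) j :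
  coefs (P *m M) j = \sum_(i < j.+1) coefs P i *m coefs M (j - i).
Proof.
apply/matrixP => r c; rewrite !mxE summxE coef_sum.
under eq_bigr do rewrite coefM.
rewrite exchange_big /=; apply: eq_bigr => i _; rewrite !mxE.
by apply: eq_bigr => s _; rewrite !mxE.
Qed.


Definition lowz m k (M : 'M[{poly C}]_(m, k)) (K : nat) :=
  forall j, (j < K)%N -> coefs M j = 0.

Lemma lowzMl m k l (P : 'M[{poly C}]_(m, k)) (M : 'M[{poly C}]_(k, l)) K :
  lowz M K -> lowz (P *m M) K.
Proof.
move=> h j hj; rewrite coefsM big1 // => i _; rewrite h ?mulmx0 //.
by apply: leq_ltn_trans hj; apply: leq_subr.
Qed.

Lemma lowzMr m k l (P : 'M[{poly C}]_(m, k)) (M : 'M[{poly C}]_(k, l)) K :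
  lowz P K -> lowz (P *m M) K.
Proof.
move=> h j hj; rewrite coefsM big1 // => i _; rewrite h ?mul0mx //.
by apply: leq_ltn_trans hj; rewrite -ltnS.
Qed.

Lemma lowzN m k (M : 'M[{poly C}]_(m, k)) K : lowz M K -> lowz (- M) K.
Proof. by move=> h; rewrite -(mul1mx M) -mulNmx; apply: lowzMl. Qed.

Lemma coefs_polyC m k (M : 'M[C]_(m, k)) j :
  coefs (map_mx polyC M) j = if j == 0%N then M else 0.
Proof.
by apply/matrixP => r s; rewrite !mxE coefC; case: (j == 0%N); rewrite ?mxE.
Qed.

Lemma coefs_Cl m k l (M : 'M[C]_(m, k)) (V : 'M[{poly C}]_(k, l)) j :
  coefs (map_mx polyC M *m V) j = M *m coefs V j.
Proof.
rewrite coefsM big_ord_recl coefs_polyC eqxx subn0 big1 ?addr0 // => i _.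
by rewrite coefs_polyC /= mul0mx.
Qed.

Lemma coefs_Cr m k l (V : 'M[{poly C}]_(m, k)) (M : 'M[C]_(k, l)) j :
  coefs (V *m map_mx polyC M) j = coefs V j *m M.
Proof.
rewrite coefsM (bigD1 ord_max) //= subnn coefs_polyC eqxx big1 ?addr0 // => i hi.
rewrite coefs_polyC; case: eqP => [e|]; last by rewrite mulmx0.
by case/eqP: hi; apply: val_inj => /=; move: (ltn_ord i); rewrite ltnS => hle; apply/eqP; rewrite eqn_leq hle -subn_eq0 e.
Qed.

Lemma taylor_coefs N (Q : 'M[{poly C}]_N) lam l :
  taylor Q lam l = coefs (map_mx (shiftp lam) Q) l.
Proof. by apply/matrixP => r s; rewrite !mxE taylor_shift. Qed.

Lemma right_chain_iff N (Q : 'M[{poly C}]_N) lam K xs (v : 'cV[{poly C}]_N) :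
  (forall j, (j < K)%N -> coefs v j = xs j) ->
  right_jordan_chain Q lam K xs <-> lowz (map_mx (shiftp lam) Q *m v) K.
Proof.
move=> hv; have E : forall j, (j < K)%N ->
   \sum_(l < j.+1) taylor Q lam l *m xs (j - l)%N = coefs (map_mx (shiftp lam) Q *m v) j.
  move=> j hj; rewrite coefsM; apply: eq_bigr => l _; rewrite taylor_coefs hv //.
  by apply: leq_ltn_trans hj; apply: leq_subr.
by split => h j hj; [rewrite -E // h | rewrite E // h].
Qed.

Lemma left_chain_iff N (Q : 'M[{poly C}]_N) lam K xs (w : 'rV[{poly C}]_N) :
  (forall j, (j < K)%N -> coefs w j = ctr (xs j)) ->
  left_jordan_chain Q lam K xs <-> lowz (w *m map_mx (shiftp lam) Q) K.
Proof.
move=> hw; have E : forall j, (j < K)%N ->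
   \sum_(l < j.+1) ctr (xs (j - l)%N) *m taylor Q lam l = coefs (w *m map_mx (shiftp lam) Q) j.
  move=> j hj; rewrite coefsM (reindex_inj rev_ord_inj) /=; apply: eq_bigr => l _.
  have hl : (l <= j)%N by rewrite -ltnS.
  by rewrite taylor_coefs hw ?subKn //; apply: leq_ltn_trans hj.
by split => h j hj; [rewrite -E // h | rewrite E // h].
Qed.

End Gen.


Section Blocks.
Variables (C : numClosedFieldType) (n d : nat) (A : 'I_d.+1 -> 'M[C]_n).
Local Notation N := (\sum_(j < d) n)%N.

Definition Eb (i : nat) : 'M[C]_(n, N) :=
  \mxrow_(j < d) (if val j == i then 1%:M else 0 : 'M[C]_n).

Lemma sum_delta (V : nmodType) (F : 'I_d -> V) (i : 'I_d) :
  \sum_(l < d) (if l == i then F l else 0) = F i.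
Proof. by rewrite -big_mkcond big_pred1_eq. Qed.

Lemma sum_delta_nat (V : nmodType) (F : 'I_d -> V) (i : nat) (hi : (i < d)%N) :
  \sum_(l < d) (if val l == i then F l else 0) = F (Ordinal hi).
Proof.
rewrite -(sum_delta F (Ordinal hi)); apply: eq_bigr => l _.
by rewrite -val_eqE.
Qed.

Lemma sum_delta_out (V : nmodType) (F : 'I_d -> V) (i : nat) : (d <= i)%N ->
  \sum_(l < d) (if val l == i then F l else 0) = 0.
Proof.
move=> hi; rewrite big1 // => l _; case: eqP => // e.
by move: (ltn_ord l); rewrite e ltnNge hi.
Qed.

Lemma EbEbT i j : Eb i *m (Eb j)^T = if (i == j) && (i < d)%N then 1%:M else 0.
Proof.
rewrite /Eb tr_mxrow mul_mxrow_mxcol.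
rewrite (eq_bigr (fun l : 'I_d => if val l == i then (if i == j then 1%:M else 0 : 'M[C]_n) else 0)); last first.
  move=> l _; case: eqP => [e|_]; last by rewrite mul0mx.
  by rewrite e mul1mx; case: (i == j); rewrite ?trmx1 ?trmx0.
case: (ltnP i d) => hi; last by rewrite sum_delta_out // andbF.
by rewrite (sum_delta_nat _ hi) andbT.
Qed.

Lemma EbTEb i : (Eb i)^T *m Eb i =
  \mxblock_(a < d, b < d) (if (val a == i) && (val b == i) then 1%:M else 0 : 'M[C]_n).
Proof.
rewrite /Eb tr_mxrow mul_mxcol_mxrow; apply: eq_mxblock => a b.
case: eqP => _; case: eqP => _ /=; by rewrite ?trmx1 ?trmx0 ?mul1mx ?mul0mx ?mulmx0.
Qed.

Lemma sumEbTEb : \sum_(i < d) (Eb i)^T *m Eb i = 1%:M.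
Proof.
have -> : \sum_(i < d) (Eb i)^T *m Eb i = \sum_(i < d)
   \mxblock_(a < d, b < d) (if (val a == i) && (val b == i) then 1%:M else 0 : 'M[C]_n).
  by apply: eq_bigr => i _; exact: EbTEb.
rewrite -mxblock_sum.
have <- := mxdiagZ (p_ := fun _ : 'I_d => n) (1 : C).
rewrite /mxdiag; apply: eq_mxblock => a b.
rewrite conform_mx_id.
rewrite (eq_bigr (fun i : 'I_d => if i == a then (if a == b then 1%:M else 0 : 'M[C]_n) else 0)); last first.
  move=> l _; rewrite !val_eqE; case: (eqVneq l a) => [->|] /=; last by [].
  by rewrite eq_sym; case: (a == b).
by rewrite sum_delta.
Qed.

Lemma Eb_ext m (M1 M2 : 'M[C]_(N, m)) :
  (forall i : 'I_d, Eb i *m M1 = Eb i *m M2) -> M1 = M2.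
Proof.
move=> h; rewrite -(mul1mx M1) -(mul1mx M2) -sumEbTEb !mulmx_suml.
by apply: eq_bigr => i _; rewrite -!mulmxA h.
Qed.

Lemma EbT_ext m (M1 M2 : 'M[C]_(m, N)) :
  (forall i : 'I_d, M1 *m (Eb i)^T = M2 *m (Eb i)^T) -> M1 = M2.
Proof.
move=> h; rewrite -(mulmx1 M1) -(mulmx1 M2) -sumEbTEb !mulmx_sumr.
by apply: eq_bigr => i _; rewrite !mulmxA h.
Qed.

Lemma Eb_mxblock i (hi : (i < d)%N) (B_ : 'I_d -> 'I_d -> 'M[C]_n) :
  Eb i *m \mxblock_(a < d, b < d) B_ a b = \mxrow_(b < d) B_ (Ordinal hi) b.
Proof.
rewrite /Eb mul_mxrow_mxblock; apply: eq_mxrow => b.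
rewrite -(sum_delta_nat (fun a => B_ a b) hi); apply: eq_bigr => a _.
by case: eqP; rewrite ?mul1mx ?mul0mx.
Qed.

Lemma mxblock_EbT i (hi : (i < d)%N) (B_ : 'I_d -> 'I_d -> 'M[C]_n) :
  \mxblock_(a < d, b < d) B_ a b *m (Eb i)^T = \mxcol_(a < d) B_ a (Ordinal hi).
Proof.
rewrite /Eb tr_mxrow mul_mxblock_mxrow; apply: eq_mxcol => a.
rewrite -(sum_delta_nat (fun b => B_ a b) hi); apply: eq_bigr => b _.
by case: eqP; rewrite ?trmx1 ?trmx0 ?mulmx1 ?mulmx0.
Qed.

Lemma RA1 i : (i.+1 < d)%N -> Eb i *m companionA A = Eb i.+1.
Proof.
move=> hi; rewrite /companionA (Eb_mxblock (ltnW hi)) /Eb; apply: eq_mxrow => b /=.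
case: eqP => // e; lia.
Qed.

Lemma RA2 (hd : (0 < d)%N) :
  Eb d.-1 *m companionA A = \sum_(j < d) A (widen_ord (leqnSn d) j) *m Eb j.
Proof.
have hi : (d.-1 < d)%N by rewrite prednK.
rewrite /companionA (Eb_mxblock hi) /=.
have -> : \sum_(j < d) A (widen_ord (leqnSn d) j) *m Eb j =
   \sum_(j < d) \mxrow_(b < d) (A (widen_ord (leqnSn d) j) *m
        (if val b == val j then 1%:M else 0 : 'M[C]_n)).
  by apply: eq_bigr => j _; rewrite /Eb mul_mxrow.
rewrite -mxrow_sum; apply: eq_mxrow => b; rewrite eqxx.
rewrite -(sum_delta (fun j => A (widen_ord (leqnSn d) j)) b); apply: eq_bigr => j _.
by rewrite val_eqE eq_sym; case: eqP => _; rewrite ?mulmx1 ?mulmx0.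
Qed.

Lemma RB1 i : (i.+1 < d)%N -> Eb i *m companionB A = Eb i.
Proof.
move=> hi; rewrite /companionB /Eb mul_mxrow_mxdiag; apply: eq_mxrow => b /=.
case: eqP => [e|]; last by rewrite mul0mx.
by rewrite mul1mx; case: eqP => // e'; lia.
Qed.

Lemma RB2 : Eb d.-1 *m companionB A = - A ord_max *m Eb d.-1.
Proof.
rewrite /companionB /Eb mul_mxrow_mxdiag mulNmx mul_mxrow -mxrowN; apply: eq_mxrow => b /=.
by case: eqP => _; rewrite ?mul1mx ?mul0mx ?mulmx1 ?mulmx0 ?oppr0.
Qed.

Lemma CA_col (hd : (0 < d)%N) (m : 'I_d) :
  companionA A *m (Eb m)^T = (if val m == 0%N then 0 else (Eb m.-1)^T)
     + (Eb d.-1)^T *m A (widen_ord (leqnSn d) m).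
Proof.
rewrite /companionA (mxblock_EbT (ltn_ord m)) /Eb !tr_mxrow mxcol_mul.
case: eqP => hm0.
  rewrite add0r; apply: eq_mxcol => a /=.
  case: eqP => _; rewrite ?trmx1 ?trmx0 ?mul1mx ?mul0mx.
    by congr (A _); apply: val_inj.
  by rewrite hm0.
rewrite -mxcolD; apply: eq_mxcol => a /=.
have hm := ltn_ord m.
case: eqP => ha; rewrite ?trmx1 ?trmx0 ?mul1mx ?mul0mx.
  case: eqP => e; first by (have hm0' : nat_of_ord m <> 0%N by exact: hm0); lia.
  by rewrite trmx0 add0r; congr (A _); apply: val_inj.
have hm0' : nat_of_ord m <> 0%N by exact: hm0.
rewrite addr0; case: eqP => e1; case: eqP => e2; rewrite ?trmx1 ?trmx0 //; lia.
Qed.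

Lemma CB_col1 m : (m.+1 < d)%N -> companionB A *m (Eb m)^T = (Eb m)^T.
Proof.
move=> hm; rewrite /companionB /Eb tr_mxrow mul_mxdiag_mxcol; apply: eq_mxcol => a /=.
by case: eqP => e1; case: eqP => e2; rewrite ?trmx1 ?trmx0 ?mulmx1 ?mulmx0 ?mul1mx //; lia.
Qed.

Lemma CB_col2 : companionB A *m (Eb d.-1)^T = - ((Eb d.-1)^T *m A ord_max).
Proof.
rewrite /companionB /Eb tr_mxrow mul_mxdiag_mxcol mxcol_mul -mxcolN; apply: eq_mxcol => a /=.
by case: eqP => _; rewrite ?trmx1 ?trmx0 ?mul1mx ?mul0mx ?mulmx1 ?mulmx0 ?oppr0.
Qed.

End Blocks.


Ltac fixeq := repeat match goal with
  | H : @eq (Equality.sort _) ?a ?b |- _ => change (@eq nat a b) in H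
  | H : not (@eq (Equality.sort _) ?a ?b) |- _ => change (not (@eq nat a b)) in H
  end.
Ltac vlia := fixeq; first [lia | exfalso; lia].

Section Poly.
Variables (C : numClosedFieldType) (n d : nat) (A : 'I_d.+1 -> 'M[C]_n).
Variable (lam : C).
Local Notation N := (\sum_(j < d) n)%N.
Local Notation PC := (@polyC C).
Local Notation Eb := (@Eb C n d).

Definition z : {poly C} := 'X + lam%:P.
Definition Ap j : 'M[{poly C}]_n := map_mx PC (A j).
Definition Ps : 'M[{poly C}]_n := \sum_(j < d.+1) z ^+ j *: Ap j.
Definition CAp := map_mx PC (companionA A).
Definition CBp := map_mx PC (companionB A).
Definition Ls : 'M[{poly C}]_N := z *: CBp - CAp.
Definition Ep i : 'M[{poly C}]_(n, N) := map_mx PC (Eb i).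

Lemma Ps_eq : map_mx (shiftp lam) (matpoly A) = Ps.
Proof.
apply/matrixP => r s; rewrite !mxE /shiftp summxE rmorph_sum.
apply: eq_bigr => j _; rewrite !mxE rmorphM /= comp_polyC rmorphXn /= comp_polyX.
by rewrite mulrC.
Qed.

Lemma Ls_eq : map_mx (shiftp lam) (pencil (companionA A) (companionB A)) = Ls.
Proof.
apply/matrixP => r s; rewrite !mxE /shiftp rmorphB rmorphM /= comp_polyX !comp_polyC.
by [].
Qed.

Lemma mapC1 k : map_mx PC (1%:M : 'M[C]_k) = 1%:M.
Proof. by rewrite map_scalar_mx. Qed.

Lemma EpEpT i j : Ep i *m (Ep j)^T = if (i == j) && (i < d)%N then 1%:M else 0.
Proof.
rewrite /Ep map_trmx -map_mxM EbEbT; case: ifP => _; first exact: mapC1.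
exact: map_mx0.
Qed.

Lemma sumEpTEp : \sum_(i < d) (Ep i)^T *m Ep i = 1%:M.
Proof.
rewrite -mapC1 -sumEbTEb map_mx_sum; apply: eq_bigr => i _.
by rewrite map_mxM map_trmx.
Qed.

Lemma Ep_ext m (M1 M2 : 'M[{poly C}]_(N, m)) :
  (forall i : 'I_d, Ep i *m M1 = Ep i *m M2) -> M1 = M2.
Proof.
move=> h; rewrite -(mul1mx M1) -(mul1mx M2) -sumEpTEp !mulmx_suml.
by apply: eq_bigr => i _; rewrite -!mulmxA h.
Qed.

Lemma EpT_ext m (M1 M2 : 'M[{poly C}]_(m, N)) :
  (forall i : 'I_d, M1 *m (Ep i)^T = M2 *m (Ep i)^T) -> M1 = M2.
Proof.
move=> h; rewrite -(mulmx1 M1) -(mulmx1 M2) -sumEpTEp !mulmx_sumr.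
by apply: eq_bigr => i _; rewrite !mulmxA h.
Qed.

Lemma PRA1 i : (i.+1 < d)%N -> Ep i *m CAp = Ep i.+1.
Proof. by move=> h; rewrite /Ep /CAp -map_mxM RA1. Qed.

Lemma PRA2 (hd : (0 < d)%N) :
  Ep d.-1 *m CAp = \sum_(j < d) Ap (widen_ord (leqnSn d) j) *m Ep j.
Proof.
rewrite /Ep /CAp -map_mxM RA2 // map_mx_sum; apply: eq_bigr => j _.
by rewrite map_mxM.
Qed.

Lemma PRB1 i : (i.+1 < d)%N -> Ep i *m CBp = Ep i.
Proof. by move=> h; rewrite /Ep /CBp -map_mxM RB1. Qed.

Lemma PRB2 : Ep d.-1 *m CBp = - Ap ord_max *m Ep d.-1.
Proof. by rewrite /Ep /CBp -map_mxM RB2 map_mxM map_mxN. Qed.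

Lemma PCA_col (hd : (0 < d)%N) (m : 'I_d) :
  CAp *m (Ep m)^T = (if val m == 0%N then 0 else (Ep m.-1)^T)
     + (Ep d.-1)^T *m Ap (widen_ord (leqnSn d) m).
Proof.
rewrite /Ep /CAp !map_trmx -map_mxM CA_col // map_mxD map_mxM.
by case: ifP => _; rewrite ?map_mx0.
Qed.

Lemma PCB_col1 m : (m.+1 < d)%N -> CBp *m (Ep m)^T = (Ep m)^T.
Proof. by move=> h; rewrite /Ep /CBp !map_trmx -map_mxM CB_col1. Qed.

Lemma PCB_col2 : CBp *m (Ep d.-1)^T = - ((Ep d.-1)^T *m Ap ord_max).
Proof. by rewrite /Ep /CBp !map_trmx -map_mxM CB_col2 map_mxN map_mxM. Qed.

Definition Z : 'M[{poly C}]_(N, n) := \sum_(i < d) z ^+ i *: (Ep i)^T.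

Lemma Ep_Z j : (j < d)%N -> Ep j *m Z = z ^+ j *: 1%:M.
Proof.
move=> hj; rewrite /Z mulmx_sumr.
rewrite (eq_bigr (fun i : 'I_d => if val i == j then z ^+ i *: 1%:M else 0)); last first.
  move=> i _; rewrite -scalemxAr EpEpT hj andbT eq_sym.
  by case: eqP => _; rewrite ?scaler0.
by rewrite (sum_delta_nat (fun i : 'I_d => z ^+ i *: (1%:M : 'M[{poly C}]_n)) hj).
Qed.

Lemma I1 (hd : (0 < d)%N) : Ls *m Z = - ((Ep d.-1)^T *m Ps).
Proof.
apply: Ep_ext => m.
rewrite /Ls mulmxA mulmxBr -scalemxAr mulmxN mulmxA EpEpT.
case: (ltnP m.+1 d) => hm.
  rewrite PRB1 // PRA1 // mulmxBl -scalemxAl !Ep_Z // scalerA -exprS subrr.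
  by case: eqP => [e|]; [vlia | rewrite mul0mx oppr0].
have e : nat_of_ord m = d.-1 by have := ltn_ord m; lia.
rewrite e eqxx prednK // leqnn mul1mx.
rewrite PRB2 PRA2 // mulmxBl mulmx_suml -scalemxAl.
rewrite /Ps big_ord_recr /= opprD addrC.
have -> : \sum_(i < d) Ap (widen_ord (leqnSn d) i) *m Ep i *m Z =
          \sum_(i < d) z ^+ i *: Ap (widen_ord (leqnSn d) i).
  by apply: eq_bigr => i _; rewrite -mulmxA Ep_Z // -scalemxAr mulmx1.
rewrite -mulmxA Ep_Z ?prednK // mulNmx -scalemxAr mulmx1 scalerN scalerA -exprS prednK //.
Qed.


Definition G i : 'M[{poly C}]_n := \sum_(j < d.+1 | (i <= j)%N) z ^+ (j - i) *: Ap j.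
Definition Yc i : 'M[{poly C}]_n := if i == d.-1 then 1%:M else - G i.+1.
Definition Y : 'M[{poly C}]_(n, N) := \sum_(i < d) Yc i *m Ep i.

Lemma Y_EpT j : (j < d)%N -> Y *m (Ep j)^T = Yc j.
Proof.
move=> hj; rewrite /Y mulmx_suml.
rewrite (eq_bigr (fun i : 'I_d => if val i == j then Yc i else 0)); last first.
  move=> i _; rewrite -mulmxA EpEpT ltn_ord andbT.
  by case: eqP => _; rewrite ?mulmx1 ?mulmx0.
by rewrite (sum_delta_nat (fun i : 'I_d => Yc i) hj).
Qed.

Lemma Ap_widen (m : 'I_d) : Ap (widen_ord (leqnSn d) m) = Ap (inord m).
Proof. by congr Ap; apply: val_inj; rewrite /= inordK // ltnS ltnW. Qed.

Lemma Ap_max : Ap ord_max = Ap (inord d).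
Proof. by congr Ap; apply: val_inj; rewrite /= inordK. Qed.

Lemma Grec i : (i <= d)%N -> G i = Ap (inord i) + z *: G i.+1.
Proof.
move=> hi; rewrite /G (bigD1 (inord i)) /=; last by rewrite inordK.
rewrite inordK // subnn expr0 scale1r scaler_sumr; congr (_ + _).
apply: eq_big => [j|j hj].
  case: (eqVneq j (inord i)) => [->|hne]; first by rewrite inordK // ltnn andbF.
  rewrite andbT; apply/idP/idP => h; last by vlia.
  have : val j != i by apply: contra hne => /eqP e; apply/eqP; apply: val_inj; rewrite /= inordK.
  move/eqP=> hne'; change (nat_of_ord j <> i) in hne'; lia.
rewrite (scalerA z) -exprS; congr (z ^+ _ *: _).
move/andP: hj => [h1 h2].
have h3 : nat_of_ord j <> i.
  by move=> e; move/eqP: h2; apply; apply: val_inj; rewrite /= inordK // -e.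
lia.
Qed.

Lemma G0 : G 0 = Ps.
Proof. by rewrite /G /Ps; apply: eq_big => [j|j _]; rewrite ?subn0. Qed.

Lemma Gout : G d.+1 = 0.
Proof. by rewrite /G big1 // => j hj; have := ltn_ord j; vlia. Qed.

Lemma zm1 (V : zmodType) (a b : V) : - b - a = - (a + b).
Proof. by rewrite opprD addrC. Qed.

Lemma zm2 (V : zmodType) (a b : V) : - b - (- (a + b) + a) = 0.
Proof. by rewrite opprD opprK (addrC a b) addrK addNr. Qed.

Lemma I2 (hd : (0 < d)%N) : Y *m Ls = - (Ps *m Ep 0).
Proof.
apply: EpT_ext => m.
have hm0 := ltn_ord m.
rewrite /Ls -mulmxA mulmxBl -scalemxAl mulNmx -mulmxA EpEpT.
have Y1 : Yc d.-1 = 1%:M by rewrite /Yc eqxx.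
case: (ltnP m.+1 d) => hm.
  rewrite PCB_col1 // PCA_col // mulmxBr -scalemxAr Y_EpT // mulmxDr mulmxA Y_EpT ?prednK // Y1 mul1mx.
  rewrite Ap_widen.
  have Ym : Yc m = - G m.+1 by rewrite /Yc; case: eqP => // e; vlia.
  rewrite Ym scalerN.
  case: eqP => [e0|ne0].
    by rewrite mulmx0 add0r e0 eqxx hd mulmx1 -G0 (Grec (leq0n _)) zm1.
  have ne0' : nat_of_ord m <> 0%N by [].
  rewrite Y_EpT; last by lia.
  have -> : Yc m.-1 = - G m by rewrite /Yc; case: eqP => [e|_]; [lia | rewrite prednK //; lia].
  have -> : (0%N == m) = false by apply/eqP; lia.
  by rewrite mulmx0 oppr0 (Grec (ltnW hm0)) zm2.
have e : nat_of_ord m = d.-1 by lia.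
have CB2 : CBp *m (Ep m)^T = - ((Ep d.-1)^T *m Ap ord_max) by rewrite e PCB_col2.
rewrite CB2 PCA_col // mulmxBr -scalemxAr mulmxN mulmxA Y_EpT ?prednK // Y1 mul1mx.
rewrite mulmxDr mulmxA Y_EpT ?prednK // Y1 mul1mx Ap_widen Ap_max scalerN.
case: eqP => [e0|ne0].
  have e0' : nat_of_ord m = 0%N := e0. have d1 : d = 1%N by lia.
  rewrite mulmx0 add0r e0 eqxx hd mulmx1 -G0 (Grec (leq0n _)) (Grec (_ : 1 <= d)%N); last by lia.
  have -> : 2%N = d.+1 by lia.
  rewrite Gout scaler0 addr0.
  have -> : inord d = inord 1 :> 'I_d.+1 by congr inord.
  by rewrite zm1.
have ne0' : nat_of_ord m <> 0%N by [].
rewrite Y_EpT; last by lia.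
have -> : Yc m.-1 = - G m by rewrite /Yc; case: eqP => [e'|_]; [lia | rewrite prednK //; lia].
have -> : (0%N == m) = false by apply/eqP; lia.
rewrite mulmx0 oppr0 (Grec (ltnW hm0)).
have -> : m.+1 = d by lia.
rewrite (Grec (leqnn d)) Gout scaler0 addr0.
have -> : inord m = inord d.-1 :> 'I_d.+1 by congr inord.
exact: zm2.
Qed.

End Poly.


Section Conj.
Variable C : numClosedFieldType.
Definition cv N (r : 'rV[C]_N) : 'cV[C]_N := (map_mx Num.conj r)^T.
Lemma ctr_cv N (r : 'rV[C]_N) : ctr (cv r) = r.
Proof. by apply/matrixP => i j; rewrite !mxE conjCK. Qed.
Lemma cv_ctr N (v : 'cV[C]_N) : cv (ctr v) = v.
Proof. by apply/matrixP => i j; rewrite !mxE conjCK. Qed.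

Lemma conj_Eb n d i : map_mx Num.conj (Eb C n d i) = Eb C n d i.
Proof.
apply/matrixP => r s; rewrite !mxE.
by case: ifP => _; rewrite !mxE ?rmorph_nat ?conjC0 //; case: (r == _); rewrite ?conjC1 ?conjC0.
Qed.

Lemma ctr_Eb n d i (y : 'cV[C]_(\sum_(j < d) n)) :
  ctr (Eb C n d i *m y) = ctr y *m (Eb C n d i)^T.
Proof. by rewrite /ctr map_mxM conj_Eb trmx_mul. Qed.
End Conj.

Section Chains.
Variables (C : numClosedFieldType) (n d : nat) (A : 'I_d.+1 -> 'M[C]_n).
Hypothesis hd : (0 < d)%N.
Variable lam : C.
Local Notation N := (\sum_(j < d) n)%N.
Local Notation PC := (@polyC C).
Local Notation CA := (companionA A).
Local Notation CB := (companionB A).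

Definition vp k K (xs : nat -> 'cV[C]_k) : 'cV[{poly C}]_k :=
  \matrix_(r, c) \poly_(j < K) (xs j r c).
Definition wp k K (xs : nat -> 'cV[C]_k) : 'rV[{poly C}]_k :=
  \matrix_(r, c) \poly_(j < K) (ctr (xs j) r c).

Lemma coefs_vp k K xs j : (j < K)%N -> coefs (@vp k K xs) j = xs j.
Proof. by move=> hj; apply/matrixP => r c; rewrite !mxE coef_poly hj. Qed.
Lemma coefs_wp k K xs j : (j < K)%N -> coefs (@wp k K xs) j = ctr (xs j).
Proof. by move=> hj; apply/matrixP => r c; rewrite !mxE coef_poly hj !mxE. Qed.

Lemma RC1 K xs : right_jordan_chain (matpoly A) lam K xs ->
  exists ys, right_jordan_chain (pencil CA CB) lam K ys /\
             forall j, (j < K)%N -> Fmx C n d *m ys j = xs j.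
Proof.
move=> ch.
have h := (right_chain_iff (matpoly A) lam (coefs_vp xs)).1 ch.
rewrite Ps_eq in h.
pose V := Z n d lam *m vp K xs.
exists (coefs V); split.
  apply/(right_chain_iff _ _ (v := V) (fun j _ => erefl)).
  rewrite Ls_eq /V mulmxA I1 // mulNmx -mulmxA; apply: lowzN; exact: lowzMl.
move=> j hj; rewrite -coefs_Cl /V mulmxA.
have -> : map_mx PC (Fmx C n d) *m Z n d lam = 1%:M.
  by rewrite (Ep_Z n lam hd) expr0 scale1r.
by rewrite mul1mx coefs_vp.
Qed.

Lemma RC2 K ys : right_jordan_chain (pencil CA CB) lam K ys ->
  right_jordan_chain (matpoly A) lam K (fun j => Fmx C n d *m ys j).
Proof.
move=> ch.
have h := (right_chain_iff (pencil CA CB) lam (coefs_vp ys)).1 ch.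
rewrite Ls_eq in h.
pose v := map_mx PC (Fmx C n d) *m vp K ys.
apply/(right_chain_iff _ _ (v := v)).
  by move=> j hj; rewrite /v coefs_Cl coefs_vp.
rewrite Ps_eq /v mulmxA.
have -> : Ps A lam *m map_mx PC (Fmx C n d) = - (Y A lam *m Ls A lam) by rewrite (I2 A lam hd) opprK.
rewrite mulNmx -mulmxA; apply: lowzN; exact: lowzMl.
Qed.

Lemma LC1 K xs : left_jordan_chain (matpoly A) lam K xs ->
  exists ys, left_jordan_chain (pencil CA CB) lam K ys /\
             forall j, (j < K)%N -> Lmx C n d *m ys j = xs j.
Proof.
move=> ch.
have h := (left_chain_iff (matpoly A) lam (coefs_wp xs)).1 ch.
rewrite Ps_eq in h.
pose W := wp K xs *m Y A lam.
exists (fun j => cv (coefs W j)); split.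
  apply/(left_chain_iff _ _ (w := W)); first by move=> j _; rewrite ctr_cv.
  rewrite Ls_eq /W -mulmxA I2 // mulmxN mulmxA; apply: lowzN; exact: lowzMr.
move=> j hj; rewrite -[LHS]cv_ctr ctr_Eb ctr_cv -coefs_Cr /W -mulmxA.
have -> : Y A lam *m map_mx PC ((Lmx C n d)^T) = 1%:M.
  by rewrite -map_trmx (Y_EpT A lam (_ : d.-1 < d)%N) ?prednK // /Yc eqxx.
by rewrite mulmx1 coefs_wp // cv_ctr.
Qed.

Lemma LC2 K ys : left_jordan_chain (pencil CA CB) lam K ys ->
  left_jordan_chain (matpoly A) lam K (fun j => Lmx C n d *m ys j).
Proof.
move=> ch.
have h := (left_chain_iff (pencil CA CB) lam (coefs_wp ys)).1 ch.
rewrite Ls_eq in h.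
pose u := wp K ys *m (map_mx PC (Lmx C n d))^T.
apply/(left_chain_iff _ _ (w := u)).
  by move=> j hj; rewrite /u map_trmx coefs_Cr coefs_wp // ctr_Eb.
rewrite Ps_eq /u -mulmxA.
have -> : (map_mx PC (Lmx C n d))^T *m Ps A lam = - (Ls A lam *m Z n d lam) by rewrite (I1 A lam hd) opprK.
rewrite mulmxN mulmxA; apply: lowzN; exact: lowzMr.
Qed.

End Chains.


Section Final.
Variable C : numClosedFieldType.

Lemma span_map N M (S : 'cV[C]_N -> Prop) (T : 'cV[C]_M -> Prop) (F : 'M[C]_(N, M)) :
  (forall v, S v -> exists y, T y /\ v = F *m y) -> (forall y, T y -> S (F *m y)) ->
  forall x, Defs.span S x <-> exists y, Defs.span T y /\ x = F *m y.
Proof.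
move=> h1 h2 x; split.
  case=> m [v [c [Sv ->]]].
  have [u hu] := fin_all_exists (fun i => h1 _ (Sv i)).
  exists (\sum_(i < m) c i *: u i); split.
    by exists m, u, c; split => // i; case: (hu i).
  rewrite mulmx_sumr; apply: eq_bigr => i _; rewrite -scalemxAr.
  by case: (hu i) => _ <-.
case=> y [[m [v [c [Tv ->]]]] ->].
exists m, (fun i => F *m v i), c; split; first by move=> i; apply: h2.
by rewrite mulmx_sumr; apply: eq_bigr => i _; rewrite -scalemxAr.
Qed.

Lemma taylor0 N (Q : 'M[{poly C}]_N) lam : taylor Q lam 0 = evalpm Q lam.
Proof. by apply/matrixP => r s; rewrite !mxE nderivn0. Qed.

Lemma chain1 N (Q : 'M[{poly C}]_N) lam x :
  right_jordan_chain Q lam 1 (fun _ => x) <-> evalpm Q lam *m x = 0.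
Proof.
split.
  by move/(_ 0%N isT); rewrite big_ord_recl big_ord0 addr0 taylor0.
move=> h j; rewrite ltnS leqn0 => /eqP ->.
by rewrite big_ord_recl big_ord0 addr0 taylor0.
Qed.

Lemma eig_right N (Q : 'M[{poly C}]_N) lam :
  nonlinear_eigenvalue Q lam <-> exists x : 'cV[C]_N, x != 0 /\ evalpm Q lam *m x = 0.
Proof.
split; first by case.
move=> [x [nx hx]]; split; first by exists x.
set M := evalpm Q lam.
have dT : \det M^T == 0.
  apply/det0P; exists x^T; first by rewrite trmx_eq0.
  by rewrite -trmx_mul hx trmx0.
rewrite det_tr in dT.
have [v nv hv] := det0P dT.
exists (cv v); split; last by rewrite ctr_cv.
apply: contra nv => /eqP e; apply/eqP.
by rewrite -(ctr_cv v) e; apply/matrixP => i j; rewrite !mxE conjC0.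
Qed.

End Final.

Section Final2.
Variables (C : numClosedFieldType) (n d : nat) (A : 'I_d.+1 -> 'M[C]_n).
Hypothesis hd : (0 < d)%N.
Local Notation N := (\sum_(j < d) n)%N.
Local Notation CA := (companionA A).
Local Notation CB := (companionB A).
Local Notation PL := (pencil CA CB).

Lemma evalpm_pencil lam : evalpm PL lam = lam *: CB - CA.
Proof. by apply/matrixP => r s; rewrite !mxE hornerD hornerN hornerM hornerX !hornerC. Qed.

Lemma kerF lam (X : 'cV[C]_N) : evalpm PL lam *m X = 0 -> Fmx C n d *m X = 0 -> X = 0.
Proof.
rewrite evalpm_pencil => hX hF.
have step m : (m.+1 < d)%N -> Eb C n d m.+1 *m X = lam *: (Eb C n d m *m X).
  move=> hm; have := congr1 (mulmx (Eb C n d m)) hX.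
  rewrite mulmx0 mulmxA mulmxBr -scalemxAr (RB1 A hm) (RA1 A hm) mulmxBl -scalemxAl.
  by move/eqP; rewrite subr_eq0 => /eqP ->.
have all m : (m < d)%N -> Eb C n d m *m X = 0.
  elim: m => [|m IH] hm; first exact: hF.
  by rewrite step // IH ?scaler0 // ltnW.
by apply: Eb_ext => i; rewrite mulmx0 all.
Qed.

Lemma eig_equiv lam :
  nonlinear_eigenvalue (matpoly A) lam <-> nonlinear_eigenvalue PL lam.
Proof.
rewrite !eig_right; split.
  move=> [x [nx hx]].
  have [ys [ch hys]] := RC1 hd ((chain1 _ _ _).2 hx).
  exists (ys 0%N); split; last by have := ch 0%N isT; rewrite big_ord_recl big_ord0 addr0 taylor0.
  by apply: contra nx => /eqP e; rewrite -(hys 0%N isT) e mulmx0.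
move=> [X [nX hX]].
have ch := RC2 hd ((chain1 _ _ _).2 hX).
exists (Fmx C n d *m X); split; last by have := ch 0%N isT; rewrite big_ord_recl big_ord0 addr0 taylor0.
by apply: contra nX => /eqP e; apply/eqP; apply: (kerF hX).
Qed.

Lemma rg1 lam x : right_gen_eigvec (matpoly A) lam x ->
  exists y, right_gen_eigvec PL lam y /\ x = Fmx C n d *m y.
Proof.
move=> [k [xs [i [ch [hi ->]]]]].
have [ys [ch' hys]] := RC1 hd ch.
by exists (ys i); split; [exists k, ys, i | rewrite hys].
Qed.

Lemma rg2 lam y : right_gen_eigvec PL lam y -> right_gen_eigvec (matpoly A) lam (Fmx C n d *m y).
Proof.
move=> [k [ys [i [ch [hi ->]]]]].
by exists k, (fun j => Fmx C n d *m ys j), i; split => //; apply: RC2.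
Qed.

Lemma lg1 lam x : left_gen_eigvec (matpoly A) lam x ->
  exists y, left_gen_eigvec PL lam y /\ x = Lmx C n d *m y.
Proof.
move=> [k [xs [i [ch [hi ->]]]]].
have [ys [ch' hys]] := LC1 hd ch.
by exists (ys i); split; [exists k, ys, i | rewrite hys].
Qed.

Lemma lg2 lam y : left_gen_eigvec PL lam y -> left_gen_eigvec (matpoly A) lam (Lmx C n d *m y).
Proof.
move=> [k [ys [i [ch [hi ->]]]]].
by exists k, (fun j => Lmx C n d *m ys j), i; split => //; apply: LC2.
Qed.

Lemma main_gen (Omega : C -> Prop) :
  (forall x : 'cV[C]_n,
     right_alg_eigenspace (matpoly A) Omega x <->
     exists y, right_alg_eigenspace PL Omega y /\ x = Fmx C n d *m y) /\
  (forall x : 'cV[C]_n,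
     left_alg_eigenspace (matpoly A) Omega x <->
     exists y, left_alg_eigenspace PL Omega y /\ x = Lmx C n d *m y).
Proof.
split; apply: span_map.
- move=> v [lam [hO [he hg]]]; have [y [hy ->]] := rg1 hg.
  by exists y; split => //; exists lam; split => //; split => //; apply/eig_equiv.
- move=> y [lam [hO [he hg]]]; exists lam; split => //; split; first exact/eig_equiv.
  exact: rg2.
- move=> v [lam [hO [he hg]]]; have [y [hy ->]] := lg1 hg.
  by exists y; split => //; exists lam; split => //; split => //; apply/eig_equiv.
- move=> y [lam [hO [he hg]]]; exists lam; split => //; split; first exact/eig_equiv.
  exact: lg2.
Qed.

End Final2.

Theorem theorem2p1 (R : realType) (n d : nat) (A : 'I_d.+1 -> 'M[R[i]]_n)
  (Omega : R[i] -> Prop) :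
  (0 < d)%N ->
  A ord_max != 0 ->
  \det (matpoly A) != 0 ->
  (forall x : 'cV[R[i]]_n,
     right_alg_eigenspace (matpoly A) Omega x <->
     exists y, right_alg_eigenspace (pencil (companionA A) (companionB A)) Omega y /\
               x = Fmx _ n d *m y) /\
  (forall x : 'cV[R[i]]_n,
     left_alg_eigenspace (matpoly A) Omega x <->
     exists y, left_alg_eigenspace (pencil (companionA A) (companionB A)) Omega y /\
               x = Lmx _ n d *m y).
Proof. by move=> hd _ _; exact: main_gen. Qed.
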